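(* Let $P,Q,R\in\mathbb P_d$, and let $U_P:=\operatorname{Pol}(P^{1/2}R^{1/2})$ and $U_Q:=\operatorname{Pol}(Q^{1/2}R^{1/2})$. Then $$\operatorname{B}_R(P,Q)=\big\|U_P^*P^{1/2}-U_Q^*Q^{1/2}\big\|_2^2,$$ where $\|A\|_2=\sqrt{\operatorname{Tr}[A^*A]}$ is the Frobenius norm.
   Context: $\mathbb P_d$ is the set of $d\times d$ complex positive definite matrices. For an invertible matrix $A$, $\operatorname{Pol}(A):=A(A^*A)^{-1/2}$ is the unitary polar factor. The generalized fidelity is $\operatorname{F}_R(P,Q):=\operatorname{Tr}\big[\sqrt{R^{1/2}PR^{1/2}}\,R^{-1}\sqrt{R^{1/2}QR^{1/2}}\big]$ and the squared generalized Bures distance is $\operatorname{B}_R(P,Q):=\operatorname{Tr}[P+Q]-2\,\mathrm{Re}\,\operatorname{F}_R(P,Q)$. *)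

(* Defs.v *)
From mathcomp Require Import all_boot all_algebra.
From mathcomp Require Import complex reals.
From Stdlib Require Import ClassicalEpsilon.

Set Implicit Arguments.
Unset Strict Implicit.
Unset Printing Implicit Defensive.

Import GRing.Theory Num.Theory.
Local Open Scope ring_scope.

Section Defs.
Variable C : numClosedFieldType.

Definition adjmx m n (A : 'M[C]_(m, n)) : 'M[C]_(n, m) := map_mx Num.conj A^T.

Definition posdefmx n (A : 'M[C]_n) : Prop :=
  adjmx A = A /\ forall x : 'cV[C]_n, x != 0 -> 0 < (adjmx x *m A *m x) 0 0.

Definition psdmx n (A : 'M[C]_n) : Prop :=
  adjmx A = A /\ forall x : 'cV[C]_n, 0 <= (adjmx x *m A *m x) 0 0.

Definition sqrtmx n (A : 'M[C]_n) : 'M[C]_n :=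
  epsilon (inhabits 0) (fun B : 'M[C]_n => psdmx B /\ B *m B = A).

Definition polmx n (A : 'M[C]_n) : 'M[C]_n :=
  A *m invmx (sqrtmx (adjmx A *m A)).

Definition gfid n (R P Q : 'M[C]_n) : C :=
  \tr (sqrtmx (sqrtmx R *m P *m sqrtmx R) *m invmx R
       *m sqrtmx (sqrtmx R *m Q *m sqrtmx R)).

Definition gbures n (R P Q : 'M[C]_n) : C :=
  \tr (P + Q) - 2 * 'Re (gfid R P Q).

Definition frobnorm m n (A : 'M[C]_(m, n)) : C := sqrtC (\tr (adjmx A *m A)).

End Defs.

(* Main.v *)
Require Import Defs.
From mathcomp Require Import all_boot all_order all_algebra.
From mathcomp Require Import complex reals.
From Stdlib Require Import ClassicalEpsilon.
From mathcomp Require Import ring.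

Set Implicit Arguments.
Unset Strict Implicit.
Unset Printing Implicit Defensive.
Import Order.TTheory GRing.Theory Num.Theory.
Local Open Scope ring_scope.

Section Gen.
Variable C : numClosedFieldType.

Lemma adjmxM m n p (A : 'M[C]_(m, n)) (B : 'M[C]_(n, p)) :
  adjmx (A *m B) = adjmx B *m adjmx A.
Proof. by rewrite /adjmx trmx_mul map_mxM. Qed.

Lemma adjmxK m n (A : 'M[C]_(m, n)) : adjmx (adjmx A) = A.
Proof. exact: trmxCK. Qed.

Lemma adjmxD m n (A B : 'M[C]_(m, n)) : adjmx (A + B) = adjmx A + adjmx B.
Proof. by rewrite /adjmx raddfD /= map_mxD. Qed.

Lemma adjmxN m n (A : 'M[C]_(m, n)) : adjmx (- A) = - adjmx A.
Proof. by rewrite /adjmx raddfN /= map_mxN. Qed.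

Lemma adjmxV n (A : 'M[C]_n) : adjmx (invmx A) = invmx (adjmx A).
Proof. by rewrite /adjmx trmx_inv map_invmx. Qed.

Lemma tr_adjmx n (A : 'M[C]_n) : \tr (adjmx A) = (\tr A)^*.
Proof. by rewrite /adjmx trace_map_mx mxtrace_tr. Qed.

Lemma adjmx_delta n (i : 'I_n) : adjmx (delta_mx i 0 : 'cV[C]_n) = delta_mx 0 i.
Proof. by rewrite /adjmx trmx_delta map_delta_mx. Qed.

Lemma sqrt_ex n (A : 'M[C]_n) : psdmx A -> exists B, psdmx B /\ B *m B = A.
Proof.
move=> [hA pA].
have hermA : A \is hermsymmx.
  by apply/is_hermitianmxP; rewrite expr0 scale1r; exact: esym hA.
have /orthomx_spectralP eA := hermitian_normalmx hermA.
set U := spectralmx A in eA; set d := spectral_diag A in eA.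
have uU : U \is unitarymx by apply: spectral_unitarymx.
have iU : invmx U = adjmx U by rewrite invmx_unitary.
have UU' : U *m adjmx U = 1%:M by apply/unitarymxP.
have U'U : adjmx U *m U = 1%:M by rewrite -iU mulVmx // spectral_unit.
rewrite iU in eA.
have UUr : forall m (B : 'M[C]_(m, n)), B *m U *m adjmx U = B.
  by move=> m B; rewrite -mulmxA UU' mulmx1.
have dge0 : forall i, 0 <= d 0 i.
  move=> i; have := pA (adjmx U *m delta_mx i 0).
  rewrite adjmxM adjmxK adjmx_delta eA !mulmxA UUr.
  rewrite -mulmxA -[_ *m U *m adjmx U]mulmxA UU' mulmx1 -rowE -colE !mxE eqxx mulr1n.
  done.
pose s := \row_j sqrtC (d 0 j).
have sge0 : forall j, 0 <= s 0 j by move=> j; rewrite mxE sqrtC_ge0.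
exists (adjmx U *m diag_mx s *m U); split; first split.
- rewrite !adjmxM adjmxK mulmxA; congr (_ *m _ *m _).
  rewrite /adjmx tr_diag_mx map_diag_mx; congr diag_mx.
  by apply/rowP => j; rewrite !mxE; apply: geC0_conj; rewrite sqrtC_ge0.
- move=> x; rewrite -!mulmxA mulmxA -adjmxM.
  move: (U *m x) => y.
  rewrite mul_diag_mx !mxE; apply: sumr_ge0 => j _.
  rewrite !mxE mulrCA; apply: mulr_ge0; first by rewrite sqrtC_ge0.
  by rewrite mulrC mul_conjC_ge0.
- rewrite !mulmxA UUr -[adjmx U *m _ *m diag_mx s]mulmxA mulmx_diag eA; congr (_ *m diag_mx _ *m _).
  by apply/rowP => j; rewrite !mxE -expr2 sqrtCK.
Qed.

Lemma sqrtmx_spec n (A : 'M[C]_n) :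
  psdmx A -> psdmx (sqrtmx A) /\ sqrtmx A *m sqrtmx A = A.
Proof.
move=> pA; rewrite /sqrtmx.
exact: (epsilon_spec (inhabits 0) (fun B : 'M[C]_n => psdmx B /\ B *m B = A) (sqrt_ex pA)).
Qed.

Lemma posdef_psd n (A : 'M[C]_n) : posdefmx A -> psdmx A.
Proof.
move=> [hA pA]; split => // x; have [->|nz] := eqVneq x 0.
  by rewrite mulmx0 mxE.
exact: ltW (pA x nz).
Qed.

Lemma adjmx_inj m n : injective (@adjmx C m n).
Proof. by move=> A B e; rewrite -[A]adjmxK e adjmxK. Qed.

Lemma posdef_unit n (A : 'M[C]_n) : posdefmx A -> A \in unitmx.
Proof.
move=> [hA pA]; rewrite -row_free_unit -kermx_eq0; apply/negPn/negP => nzK.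
set K := kermx A in nzK.
have [i nzi] : exists i, row i K != 0.
  apply/not_all_not_ex => H; move/eqP: nzK; apply; apply/row_matrixP => i.
  by rewrite row0; move: (H i); case: (row i K =P 0).
suff nz : adjmx (row i K) != 0.
  have := pA _ nz.
  by rewrite adjmxK -row_mul mulmx_ker row0 mul0mx mxE ltxx.
apply: contra nzi => /eqP e; apply/eqP; apply: adjmx_inj; rewrite e.
by rewrite /adjmx trmx0 map_mx0.
Qed.

Lemma invmx_sq n (T : 'M[C]_n) : T \in unitmx ->
  invmx (T *m T) = invmx T *m invmx T.
Proof.
move=> Tu; have TTu : T *m T \in unitmx by rewrite unitmx_mul Tu.
have e : T *m T *m (invmx T *m invmx T) = 1%:M.
  by rewrite mulmxA mulmxK // mulmxV.
by rewrite -[RHS]mul1mx -(mulVmx TTu) -mulmxA e mulmx1.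
Qed.

Lemma tr_sq_unit n (T : 'M[C]_n) : (T *m T) \in unitmx -> T \in unitmx.
Proof. by rewrite unitmx_mul => /andP[]. Qed.

Section Side.
Variables (n : nat) (P R : 'M[C]_n).
Hypotheses (pP : posdefmx P) (pR : posdefmx R).

Let S := sqrtmx P.
Let T := sqrtmx R.
Let N := sqrtmx (T *m P *m T).

Lemma hS : adjmx S = S. Proof. by case: (sqrtmx_spec (posdef_psd pP)) => [[]]. Qed.
Lemma SS : S *m S = P. Proof. by case: (sqrtmx_spec (posdef_psd pP)). Qed.
Lemma hT : adjmx T = T. Proof. by case: (sqrtmx_spec (posdef_psd pR)) => [[]]. Qed.
Lemma TT : T *m T = R. Proof. by case: (sqrtmx_spec (posdef_psd pR)). Qed.
Lemma Tu : T \in unitmx.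
Proof. by apply: tr_sq_unit; rewrite TT posdef_unit. Qed.

Lemma psdTPT : psdmx (T *m P *m T).
Proof.
case: (posdef_psd pP) => hP psP; split.
  by rewrite !adjmxM hT hP mulmxA.
move=> x; have := psP (T *m x).
by rewrite adjmxM hT !mulmxA.
Qed.

Lemma hN : adjmx N = N. Proof. by case: (sqrtmx_spec psdTPT) => [[]]. Qed.
Lemma NN : N *m N = T *m P *m T. Proof. by case: (sqrtmx_spec psdTPT). Qed.
Lemma Nu : N \in unitmx.
Proof.
apply: tr_sq_unit; rewrite NN !unitmx_mul Tu posdef_unit //.
Qed.

Lemma Ap_eq : adjmx (polmx (S *m T)) *m S = N *m invmx T.
Proof.
have e : adjmx (S *m T) *m (S *m T) = T *m P *m T.
  by rewrite adjmxM hS hT !mulmxA -[T *m S *m S]mulmxA SS.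
rewrite /polmx e -/N adjmxM adjmxV hN adjmxM hS hT.
rewrite -[LHS](mulmxK Tu); congr (_ *m invmx T).
have -> : invmx N *m (T *m S) *m S *m T = invmx N *m (N *m N).
  by rewrite NN -SS !mulmxA.
by rewrite mulKmx // Nu.
Qed.

End Side.

Lemma main_gen n (P Q R : 'M[C]_n) :
  posdefmx P -> posdefmx Q -> posdefmx R ->
  gbures R P Q = frobnorm (adjmx (polmx (sqrtmx P *m sqrtmx R)) *m sqrtmx P
     - adjmx (polmx (sqrtmx Q *m sqrtmx R)) *m sqrtmx Q) ^+ 2.
Proof.
move=> pP pQ pR.
rewrite (Ap_eq pP pR) (Ap_eq pQ pR) /frobnorm sqrtCK /gbures /gfid.
have hT' := hT pR. have Tu' := Tu pR. have TT' := TT pR.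
have hN' := hN pP pR. have hM' := hN pQ pR.
have NN' := NN pP pR. have MM' := NN pQ pR.
have Nu' := Nu pP pR. 
move: hT' Tu' TT' hN' hM' NN' MM' Nu'.
set T := sqrtmx R. set N := sqrtmx (T *m P *m T). set M := sqrtmx (T *m Q *m T).
move=> hT' Tu' TT' hN' hM' NN' MM' Nu'.
set iT := invmx T.
have hiT : adjmx iT = iT by rewrite adjmxV hT'.
rewrite adjmxD adjmxN !adjmxM hiT hN' hM'.
rewrite mulmxDl !mulmxDr !mulNmx !mulmxN !linearD !linearN /=.
have e1 : forall X (N : 'M[C]_n), N *m N = T *m X *m T ->
    \tr (iT *m N *m (N *m iT)) = \tr X.
  move=> X K KK; rewrite mulmxA -[iT *m K *m K]mulmxA KK !mulmxA.
  by rewrite mulVmx // mul1mx mulmxK.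
rewrite (e1 P N NN') (e1 Q M MM').
set g := \tr (N *m invmx R *m M).
have e2 : \tr (iT *m M *m (N *m iT)) = g.
  rewrite /g -TT' invmx_sq // -/iT -!mulmxA mxtrace_mulC -!mulmxA.
  by rewrite (mxtrace_mulC M) !mulmxA.
have e3 : \tr (iT *m N *m (M *m iT)) = g^*.
  rewrite -e2 -tr_adjmx !adjmxM hiT hN' hM' !mulmxA; done.
rewrite e2 e3 ReE mulrC divfK ?pnatr_eq0 //.
by ring.
Qed.
End Gen.

Theorem mainTheorem2 (R : realType) (d : nat) (P Q Rm : 'M[R[i]]_d) :
  posdefmx P -> posdefmx Q -> posdefmx Rm ->
  let UP := polmx (sqrtmx P *m sqrtmx Rm) in
  let UQ := polmx (sqrtmx Q *m sqrtmx Rm) in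
  gbures Rm P Q =
    frobnorm (adjmx UP *m sqrtmx P - adjmx UQ *m sqrtmx Q) ^+ 2.
Proof. move=> pP pQ pR UP UQ; exact: main_gen. Qed.
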